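(* Let $A$ be a commutative ring. Then $A^\times \cup \sqrt{(0)} \subseteq [1]^{A^\circ}_A$; equivalently, the units and nilpotent elements of $A$ are the same as those of its subring $[1]^{A^\circ}_A$. Moreover, the inclusion is an equality if and only if $A$ is unit-additive, if and only if $[1]^{A^\circ}_A$ is unit-additive, if and only if the inclusions $$A^\times \cup \sqrt{(0)} \subseteq A^\times \cup J(A) \subseteq [1]^{A^\times}_A \subseteq [1]^{\mathrm{reg}(A)}_A \subseteq [1]^{A^\circ}_A$$ are equalities.
   Context: For $T\subseteq A$, a $T$-factroid of $A$ is an additive subgroup $F$ of $A$ such that for all $a\in A$, $t\in T$, $ta\in F$ implies $a\in F$; $[1]^T_A$ is the smallest $T$-factroid of $A$ containing $1$ (it is a subring of $A$). $A^\times$ is the unit group, $J(A)$ the Jacobson radical, $\mathrm{reg}(A)$ the set of nonzerodivisors, and $A^\circ$ the complement of the union of the minimal prime ideals of $A$. A commutative ring is unit-additive if for all units $u,v$, $u+v$ is a unit or nilpotent. *)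

(* Defs.v *)
From mathcomp Require Import all_boot all_algebra.
Set Implicit Arguments. Unset Strict Implicit. Unset Printing Implicit Defensive.
Import GRing.Theory.
Local Open Scope ring_scope.

Section Defs.
Variable A : comPzRingType.  (* commutative ring, zero ring allowed *)

Definition is_unit (x : A) : Prop := exists y : A, x * y = 1.
Definition is_nilpotent (x : A) : Prop := exists n : nat, x ^+ n = 0.

Definition additive_subgroup (F : A -> Prop) : Prop :=
  F 0 /\ (forall x y, F x -> F y -> F (x - y)).
Definition is_ideal (I : A -> Prop) : Prop :=
  additive_subgroup I /\ (forall a x, I x -> I (a * x)).
Definition is_maximal_ideal (M : A -> Prop) : Prop :=
  is_ideal M /\ ~ M 1 /\
  (forall I, is_ideal I -> ~ I 1 -> (forall x, M x -> I x) -> forall x, I x -> M x).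
Definition is_prime_ideal (P : A -> Prop) : Prop :=
  is_ideal P /\ ~ P 1 /\ (forall a b, P (a * b) -> P a \/ P b).
Definition is_minimal_prime (P : A -> Prop) : Prop :=
  is_prime_ideal P /\
  (forall Q, is_prime_ideal Q -> (forall x, Q x -> P x) -> forall x, P x -> Q x).

Definition jacobson (x : A) : Prop := forall M, is_maximal_ideal M -> M x.
Definition regular (x : A) : Prop := forall y : A, x * y = 0 -> y = 0.
Definition circ (x : A) : Prop := forall P, is_minimal_prime P -> ~ P x.

Definition factroid (T F : A -> Prop) : Prop :=
  additive_subgroup F /\ (forall a t, T t -> F (t * a) -> F a).
Definition one_factroid (T : A -> Prop) (x : A) : Prop :=
  forall F, factroid T F -> F 1 -> F x.

Definition unit_additive : Prop :=
  forall u v, is_unit u -> is_unit v -> is_unit (u + v) \/ is_nilpotent (u + v).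

Definition sub_unit (S : A -> Prop) (x : A) : Prop :=
  S x /\ exists y, S y /\ x * y = 1.
Definition sub_unit_additive (S : A -> Prop) : Prop :=
  forall u v, sub_unit S u -> sub_unit S v ->
    sub_unit S (u + v) \/ is_nilpotent (u + v).
End Defs.

(* Main.v *)
Require Import Defs.
From mathcomp Require Import all_boot all_algebra ring.
From mathcomp Require Import boolp classical_sets.
Local Open Scope ring_scope.
Import GRing.Theory.

Lemma zorn_up (T : Type) (Pr : (T -> Prop) -> Prop) (base : T -> Prop) (b : T) :
  base b -> Pr base ->
  (forall F : (T -> Prop) -> Prop, (exists X, F X) ->
     (forall X, F X -> Pr X /\ (forall y, base y -> X y)) ->
     (forall X Y, F X -> F Y -> (forall y, X y -> Y y) \/ (forall y, Y y -> X y)) ->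
     Pr (fun y => exists X, F X /\ X y)) ->
  exists M, Pr M /\ (forall y, base y -> M y) /\
    forall J, Pr J -> (forall y, M y -> J y) -> forall y, J y -> M y.
Proof.
move=> bb Pb HF.
pose P' := fun X : T -> Prop => X = set0 \/ (Pr X /\ (forall y, base y -> X y)).
have [M [PM Mmax]] : exists M, P' M /\ forall B, (M `<` B)%classic -> ~ P' B.
  apply: Zorn_bigcup => F FP Ftot.
  case: (pselect (exists X, F X /\ exists y, X y)) => [[X0 [FX0 [y0 Xy0]]]|noX].
  - right.
    have Hne : forall X, F X -> (exists y, X y) -> Pr X /\ (forall y, base y -> X y).
      move=> X FX [y Xy]; case: (FP X FX) => // E; by rewrite E in Xy.
    pose F' := fun X => F X /\ exists y, X y.
    have -> : bigcup F id = (fun y => exists X, F' X /\ X y).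
      apply: funext => y; apply: propext; split.
        by case=> X FX Xy; exists X; split => //; split => //; exists y.
      by case=> X [[FX _] Xy]; exists X.
    split.
      apply: HF.
      + by exists X0; split => //; exists y0.
      + by move=> X [FX ne]; apply: Hne.
      + move=> X Y [FX _] [FY _]; case: (Ftot X Y FX FY) => H; [left|right]; exact H.
    move=> y By; exists X0; split; first by split => //; exists y0.
    by case: (Hne X0 FX0 (ex_intro _ y0 Xy0)) => _; apply.
  - left; apply: funext => y; apply: propext; split => //.
    case=> X FX Xy; exfalso; apply: noX; exists X; split => //; by exists y.
case: PM => [M0|[PrM BM]].
  exfalso; apply: (Mmax base); last by right; split.
  rewrite M0; split => // H; exact: (H b bb).
exists M; split => //; split => // J PJ MJ y Jy.
apply/not_notP => nMy; apply: (Mmax J); last by right; split => // z /BM /MJ.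
by split => // H; apply: nMy; exact: H.
Qed.

Set Implicit Arguments. Unset Strict Implicit.
Section Alg.
Variable A : comPzRingType.
Implicit Types (x y a b u v n t : A) (T F I M P : A -> Prop).

Lemma unit_mul x y : is_unit x -> is_unit y -> is_unit (x * y).
Proof. move=> [w xw] [z yz]; exists (w * z).
by rewrite mulrACA xw yz mulr1. Qed.

Lemma unit_opp x : is_unit x -> is_unit (- x).
Proof. by move=> [w xw]; exists (- w); rewrite mulrNN. Qed.

Lemma nil_mul a n : is_nilpotent n -> is_nilpotent (a * n).
Proof. by move=> [k nk]; exists k; rewrite exprMn nk mulr0. Qed.

Lemma nil_opp n : is_nilpotent n -> is_nilpotent (- n).
Proof. by move=> H; rewrite -mulN1r; apply: nil_mul. Qed.

Lemma unit_1nil n : is_nilpotent n -> is_unit (1 - n).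
Proof.
move=> [k nk]; exists (\sum_(i < k) n ^+ i).
have := subrX1 n k; rewrite nk => E.
have : - (0 - 1) = - ((n - 1) * \sum_(i < k) n ^+ i) by rewrite E.
by rewrite sub0r opprK -mulNr opprB.
Qed.

Lemma unit_add_nil u n : is_unit u -> is_nilpotent n -> is_unit (u + n).
Proof.
move=> [w uw] Hn.
have -> : u + n = u * (1 - (- (w * n))).
  by rewrite opprK mulrDr mulr1 mulrA uw mul1r.
apply: unit_mul; first by exists w.
by apply: unit_1nil; apply: nil_opp; apply: nil_mul.
Qed.

Lemma unit_circ u : is_unit u -> circ u.
Proof.
move=> [w uw] P [[[[I0 _] Im] [n1 _]] _] Pu.
by apply: n1; rewrite -uw mulrC; apply: Im.
Qed.

Lemma fac0 T F : factroid T F -> F 0.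
Proof. by case=> [[]]. Qed.
Lemma facB T F x y : factroid T F -> F x -> F y -> F (x - y).
Proof. by case=> [[_ H]] _; apply: H. Qed.
Lemma facN T F x : factroid T F -> F x -> F (- x).
Proof. by move=> H Fx; rewrite -sub0r; apply: (facB H) => //; exact: (fac0 H). Qed.
Lemma facD T F x y : factroid T F -> F x -> F y -> F (x + y).
Proof. by move=> H Fx Fy; rewrite -(opprK y); apply: (facB H) => //; apply: (facN H). Qed.

Lemma unit_fac T F u : (forall u, is_unit u -> T u) -> factroid T F -> F 1 ->
  is_unit u -> F u.
Proof.
move=> TU [_ H] F1 [w uw].
have Fw : F w by apply: (H w u); [apply: TU; exists w | rewrite uw].
apply: (H u w) => //; first by apply: TU; exists u; rewrite mulrC.
by rewrite mulrC uw.
Qed.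

Lemma nil_fac T F n : (forall u, is_unit u -> T u) -> factroid T F -> F 1 ->
  is_nilpotent n -> F n.
Proof.
move=> TU HF F1 Hn.
have -> : n = 1 - (1 - n) by rewrite opprB addrC subrK.
apply: (facB HF) => //; apply: (unit_fac (T:=T) (F:=F) TU) => //; exact: unit_1nil.
Qed.

Lemma id0 I : is_ideal I -> I 0.
Proof. by case=> [[]]. Qed.
Lemma idB I x y : is_ideal I -> I x -> I y -> I (x - y).
Proof. by case=> [[_ H]] _; apply: H. Qed.
Lemma idM I a x : is_ideal I -> I x -> I (a * x).
Proof. by case=> _ H; apply: H. Qed.
Lemma idMr I a x : is_ideal I -> I x -> I (x * a).
Proof. by move=> H Ix; rewrite mulrC; apply: idM. Qed.
Lemma idN I x : is_ideal I -> I x -> I (- x).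
Proof. by move=> H Ix; rewrite -sub0r; apply: (idB H) => //; exact: (id0 H). Qed.
Lemma idD I x y : is_ideal I -> I x -> I y -> I (x + y).
Proof. by move=> H Ix Iy; rewrite -(opprK y); apply: (idB H) => //; apply: (idN H). Qed.

Lemma prime_pow P x k : is_prime_ideal P -> P (x ^+ k) -> P x.
Proof.
move=> [HI [n1 Hp]]; elim: k => [|k IH]; first by rewrite expr0.
by rewrite exprS => /Hp [] // /IH.
Qed.

Lemma unit_ideal I u : is_ideal I -> is_unit u -> I u -> I 1.
Proof. by move=> H [w uw] Iu; rewrite -uw mulrC; apply: idM. Qed.

Definition gen (M : A -> Prop) a := fun y => exists m r, M m /\ y = m + r * a.

Lemma gen_ideal M a : is_ideal M -> is_ideal (gen M a).
Proof.
move=> HM; split; first split.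
- by exists 0, 0; split; [apply: id0 | rewrite mul0r addr0].
- move=> x y [m [r [Mm ->]]] [m' [r' [Mm' ->]]].
  exists (m - m'), (r - r'); split; first by apply: idB.
  ring.
- move=> c x [m [r [Mm ->]]]; exists (c * m), (c * r); split; first by apply: idM.
  ring.
Qed.

Lemma gen_sup M a y : is_ideal M -> M y -> gen M a y.
Proof. by move=> HM My; exists y, 0; rewrite mul0r addr0. Qed.
Lemma gen_a M a : is_ideal M -> gen M a a.
Proof. by move=> HM; exists 0, 1; split; [apply: id0 | rewrite mul1r add0r]. Qed.


Lemma zideal (S : A -> Prop) I0 : is_ideal I0 -> (forall s, S s -> ~ I0 s) ->
  exists M, is_ideal M /\ (forall s, S s -> ~ M s) /\ (forall y, I0 y -> M y) /\
   forall J, is_ideal J -> (forall s, S s -> ~ J s) -> (forall y, M y -> J y) ->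
     forall y, J y -> M y.
Proof.
move=> HI0 D0.
have [|M [[HM DM] [BM Mmax]]] :=
  @zorn_up A (fun I => is_ideal I /\ forall s, S s -> ~ I s) I0 0 (id0 HI0) (conj HI0 D0).
  move=> F [X0 FX0] HF Ftot; split; first split; first split.
  - by exists X0; split => //; apply: (id0 (HF X0 FX0).1.1).
  - move=> x y [X [FX Xx]] [Y [FY Yy]]; case: (Ftot X Y FX FY) => sub.
      by exists Y; split => //; apply: (idB (HF Y FY).1.1) => //; exact: sub.
    by exists X; split => //; apply: (idB (HF X FX).1.1) => //; exact: sub.
  - by move=> a x [X [FX Xx]]; exists X; split => //; apply: (idM _ (HF X FX).1.1).
  - by move=> s Ss [X [FX Xs]]; exact: ((HF X FX).1.2 s Ss Xs).
exists M; split => //; split => //; split => // J HJ DJ; exact: (Mmax J (conj HJ DJ)).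
Qed.

Lemma prime_avoid (S : A -> Prop) : S 1 -> (forall x y, S x -> S y -> S (x * y)) ->
  ~ S 0 -> exists P, is_prime_ideal P /\ forall s, S s -> ~ P s.
Proof.
move=> S1 SM S0.
have HI0 : is_ideal (fun y : A => y = 0).
  split; first split => //; first by move=> x y -> ->; rewrite subr0.
  by move=> a x ->; rewrite mulr0.
have [|M [HM [DM [_ Mmax]]]] := zideal (S := S) HI0.
  by move=> s Ss E; rewrite E in Ss.
exists M; split => //; split => //; split; first exact: DM.
move=> a b Mab; apply/not_notP => nab.
have na : ~ M a by move=> H; apply: nab; left.
have nb : ~ M b by move=> H; apply: nab; right.
have Ex c : ~ M c -> exists s, S s /\ gen M c s.
  move=> nc; apply/not_notP => H; apply: nc.
  apply: (Mmax _ (gen_ideal c HM)); last exact: gen_a.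
    by move=> s Ss Gs; apply: H; exists s.
  by move=> y My; exact: gen_sup.
case: (Ex a na) => s1 [S1' [m1 [r1 [Mm1 E1]]]].
case: (Ex b nb) => s2 [S2' [m2 [r2 [Mm2 E2]]]].
apply: (DM _ (SM _ _ S1' S2')); rewrite E1 E2.
have -> : (m1 + r1 * a) * (m2 + r2 * b) =
  m1 * (m2 + r2 * b) + (r1 * m2) * a + (r1 * r2) * (a * b) by ring.
apply: (idD HM); last exact: (idM _ HM).
by apply: (idD HM); [apply: (idMr _ HM) | apply: (idMr _ HM); apply: (idM _ HM)].
Qed.

Lemma max_ideal_of x : ~ is_unit x -> exists M, is_maximal_ideal M /\ M x.
Proof.
move=> nx.
have HI0 : is_ideal (fun y => exists r, y = r * x).
  split; first split.
  - by exists 0; rewrite mul0r.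
  - by move=> y z [r ->] [r' ->]; exists (r - r'); rewrite mulrBl.
  - by move=> a y [r ->]; exists (a * r); rewrite mulrA.
have [|M [HM [DM [BM Mmax]]]] := zideal (S := fun y => y = 1) HI0.
  by move=> s -> [r E]; apply: nx; exists r; rewrite mulrC E.
exists M; split; last by apply: BM; exists 1; rewrite mul1r.
split => //; split; first exact: DM.
by move=> I HI nI1 MI; apply: (Mmax I HI) => // s ->.
Qed.

Lemma nnP (P : A -> Prop) : (fun y => ~ ~ P y) = P.
Proof. by apply: funext => y; rewrite not_notE. Qed.

Lemma min_prime_below P : is_prime_ideal P ->
  exists Q, is_minimal_prime Q /\ forall y, Q y -> P y.
Proof.
move=> HP.
have HPb : is_prime_ideal (fun y => ~ ~ P y) by rewrite nnP.
have [|M [[PM1 PM2] [_ Mmax]]] :=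
  @zorn_up A (fun X => is_prime_ideal (fun y => ~ X y) /\ forall y, ~ X y -> P y)
     (fun y => ~ P y) 1 HP.2.1 (conj HPb (fun y H => proj1 (not_notP _) H)).
  move=> F [X0 FX0] HF Ftot; split; last first.
    move=> y nU; apply: ((HF X0 FX0).1.2 y) => X0y; apply: nU; exists X0; done.
  split; first split; first split.
  - by move=> [X [FX X0']]; exact: (id0 (HF X FX).1.1.1 X0').
  - move=> x y nx ny [X [FX Xxy]].
    apply: (idB (HF X FX).1.1.1 (x := x) (y := y)) Xxy.
      by move=> H; apply: nx; exists X.
    by move=> H; apply: ny; exists X.
  - move=> a x nx [X [FX Xax]]; apply: (idM a (HF X FX).1.1.1 (x := x)) Xax.
    by move=> H; apply: nx; exists X.
  split.
    move=> H; apply: H; exists X0; split => //; apply: (HF X0 FX0).2.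
    exact: HP.2.1.
  move=> a b nab; apply/not_notP => H.
  have [X1 [F1 Xa]] : exists X, F X /\ X a.
    by apply/not_notP => na; apply: H; left.
  have [X2 [F2 Xb]] : exists X, F X /\ X b.
    by apply/not_notP => nb; apply: H; right.
  have key X : F X -> X a -> X b -> False.
    move=> FX Xa' Xb'.
    case: ((HF X FX).1.1.2.2 a b (fun Xab => nab (ex_intro _ X (conj FX Xab)))) => h.
      exact: h Xa'.
    exact: h Xb'.
  case: (Ftot X1 X2 F1 F2) => sub.
    by apply: (key X2) => //; apply: sub.
  by apply: (key X1) => //; apply: sub.
exists (fun y => ~ M y); split => //; split => //.
move=> Q' HQ' Q'Q y Qy; apply/not_notP => nQ'y.
apply: Qy; apply: (Mmax (fun y => ~ Q' y)) => //.
  split; first by rewrite nnP.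
  by move=> z H; apply: PM2; apply: Q'Q; apply/not_notP.
by move=> z Mz Q'z; exact: (Q'Q z Q'z Mz).
Qed.


Lemma nonnil_minprime a : ~ is_nilpotent a -> exists Q, is_minimal_prime Q /\ ~ Q a.
Proof.
move=> na.
have [|||P [HP DP]] := prime_avoid (S := fun y => exists k, y = a ^+ k).
- by exists 0%N; rewrite expr0.
- by move=> x y [k ->] [l ->]; exists (k + l)%N; rewrite exprD.
- by move=> [k E]; apply: na; exists k.
have [Q [HQ QP]] := min_prime_below HP.
exists Q; split => // Qa; apply: (DP a); first by exists 1%N; rewrite expr1.
exact: QP.
Qed.

Lemma minprime_zd P x : is_minimal_prime P -> P x ->
  exists s k, ~ P s /\ s * x ^+ k = 0.
Proof.
move=> [HP Pmin] Px; apply/not_notP => H.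
have [|||Q [HQ DQ]] := prime_avoid (S := fun y => exists s k, ~ P s /\ y = s * x ^+ k).
- by exists 1, 0%N; split; [exact: HP.2.1 | rewrite expr0 mulr1].
- move=> y z [s [k [Ps ->]]] [s' [k' [Ps' ->]]]; exists (s * s'), (k + k')%N.
  split; last by rewrite exprD; ring.
  by case/(HP.2.2) => //.
- by move=> [s [k [Ps E]]]; apply: H; exists s, k; split.
have QP : forall y, Q y -> P y.
  move=> y Qy; apply/not_notP => Py; apply: (DQ y) => //.
  by exists y, 0%N; rewrite expr0 mulr1.
apply: (DQ x); first by exists 1, 1%N; split; [exact: HP.2.1 | rewrite expr1 mul1r].
exact: (Pmin Q HQ QP).
Qed.

Lemma reg_circ t : regular t -> circ t.
Proof.
move=> rt P HP Pt.
have [s [k [Ps E]]] := minprime_zd HP Pt.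
suff s0 : s = 0 by apply: Ps; rewrite s0; exact: (id0 HP.1.1).
elim: k E => [|k IH]; first by rewrite expr0 mulr1.
by rewrite exprSr mulrA mulrC => /rt.
Qed.

Lemma nil_jac n : is_nilpotent n -> jacobson n.
Proof.
move=> Hn M [HM [M1 Mmax]]; apply/not_notP => Mn.
have G1 : gen M n 1.
  apply/not_notP => nG; apply: Mn; apply: (Mmax _ (gen_ideal n HM) nG).
    by move=> y My; exact: gen_sup.
  exact: gen_a.
case: G1 => m [r [Mm E]].
have Um : is_unit m.
  have -> : m = 1 - r * n by rewrite E; ring.
  by apply: unit_1nil; apply: nil_mul.
by apply: M1; apply: (unit_ideal HM Um).
Qed.

Lemma jac_unit x : jacobson x -> is_unit (1 + x).
Proof.
move=> Jx; apply/not_notP => nu.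
have [M [HM M1x]] := max_ideal_of nu.
apply: HM.2.1.
have -> : 1 = (1 + x) - x by ring.
exact: (idB HM.1 M1x (Jx M HM)).
Qed.

Lemma UNfact : unit_additive A -> factroid (@circ A) (fun x => is_unit x \/ is_nilpotent x).
Proof.
move=> UA; split; first split.
- by right; exists 1%N; rewrite expr1.
- move=> x y [ux|nx] [uy|ny].
  + by apply: UA => //; apply: unit_opp.
  + by left; apply: unit_add_nil => //; apply: nil_opp.
  + by left; rewrite addrC; apply: unit_add_nil => //; apply: unit_opp.
  + have -> : x - y = (1 + x) + - (1 + y) by ring.
    apply: UA; first by apply: unit_add_nil => //; exists 1; rewrite mulr1.
    by apply: unit_opp; apply: unit_add_nil => //; exists 1; rewrite mulr1.
- move=> a t ct [[w E]|na]; first by left; exists (t * w); rewrite mulrCA mulrA E.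
  right; apply/not_notP => nn.
  have [Q [HQ Qa]] := nonnil_minprime nn.
  case: na => k E.
  have Qta : Q (t * a) by apply: (prime_pow (k := k) HQ.1); rewrite E; exact: (id0 HQ.1.1).
  by case: (HQ.1.2.2 _ _ Qta) => // /(ct Q HQ).
Qed.

End Alg.

Lemma unit_reg (A : comPzRingType) (t : A) : is_unit t -> regular t.
Proof. by move=> [w E] y ty0; rewrite -(mul1r y) -E mulrAC ty0 mul0r. Qed.

Unset Implicit Arguments.
Theorem proposition9p5 (A : comPzRingType) :
  let C := one_factroid (@circ A) in
  (forall x : A, is_unit x \/ is_nilpotent x -> C x) /\
  (forall x : A, is_unit x <-> sub_unit C x) /\
  (forall x : A, is_nilpotent x <-> (C x /\ is_nilpotent x)) /\
  (((forall x : A, C x -> is_unit x \/ is_nilpotent x) <-> unit_additive A) /\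
   (unit_additive A <-> sub_unit_additive C) /\
   (sub_unit_additive C <->
     ((forall x : A, (is_unit x \/ is_nilpotent x) <-> (is_unit x \/ jacobson x)) /\
      (forall x : A, (is_unit x \/ jacobson x) <-> one_factroid (@is_unit A) x) /\
      (forall x : A, one_factroid (@is_unit A) x <-> one_factroid (@regular A) x) /\
      (forall x : A, one_factroid (@regular A) x <-> C x)))).
Proof.
move=> C.
have UC x : is_unit x -> C x.
  by move=> ux F HF F1; apply: (unit_fac (@unit_circ A) HF F1 ux).
have NC x : is_nilpotent x -> C x.
  by move=> nx F HF F1; apply: (nil_fac (@unit_circ A) HF F1 nx).
have CD x y : C x -> C y -> C (x + y).
  by move=> Cx Cy F HF F1; apply: (facD HF); [apply: Cx | apply: Cy].
have UNC x : is_unit x \/ is_nilpotent x -> C x by case=> [/UC|/NC].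
have subU x : is_unit x <-> sub_unit C x.
  split; last by case=> _ [w [_ E]]; exists w.
  move=> ux; split; first exact: UC.
  by case: ux => w E; exists w; split => //; apply: (UC); exists x; rewrite mulrC.
have CUN_UA : (forall x : A, C x -> is_unit x \/ is_nilpotent x) <-> unit_additive A.
  split.
    by move=> H u v uu uv; apply: H; apply: (CD); apply: (UC).
  by move=> UA x Cx; apply: (Cx _ (UNfact UA)); left; exists 1; rewrite mulr1.
have UA_SUA : unit_additive A <-> sub_unit_additive C.
  split.
    move=> UA u v /(proj2 (subU u)) su /(proj2 (subU v)) sv.
    by case: (UA u v su sv) => [/(proj1 (subU _))|]; [left|right].
  move=> SUA u v /(proj1 (subU u)) su /(proj1 (subU v)) sv.
  by case: (SUA u v su sv) => [/(proj2 (subU _))|]; [left|right].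
have UFU x : is_unit x -> one_factroid (@is_unit A) x.
  by move=> ux F HF F1; apply: (unit_fac (fun u h => h) HF F1 ux).
have JFU x : jacobson x -> one_factroid (@is_unit A) x.
  move=> Jx F HF F1.
  have F1x : F (1 + x) by apply: (UFU _ (jac_unit Jx)).
  have -> : x = (1 + x) - 1 by ring.
  exact: (facB HF).
have FUFR x : one_factroid (@is_unit A) x -> one_factroid (@regular A) x.
  move=> H F HF F1; apply: H => //; split; first exact: HF.1.
  by move=> a t ut; apply: HF.2; apply: unit_reg.
have FRC x : one_factroid (@regular A) x -> C x.
  move=> H F HF F1; apply: H => //; split; first exact: HF.1.
  by move=> a t rt; apply: HF.2; apply: reg_circ.
split; first exact: UNC.
split; first exact: subU.
split; first by move=> x; split; [move=> nx; split => //; apply: NC | case].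
split; first exact: CUN_UA.
split; first exact: UA_SUA.
split.
  move=> SUA.
  have CUN := proj2 CUN_UA (proj2 UA_SUA SUA).
  have UN_UJ x : is_unit x \/ is_nilpotent x -> is_unit x \/ jacobson x.
    by case=> [ux|nx]; [left | right; apply: nil_jac].
  have UJ_FU x : is_unit x \/ jacobson x -> one_factroid (@is_unit A) x.
    by case=> [/UFU|/JFU].
  split; first by move=> x; split; [exact: UN_UJ | move=> /UJ_FU /FUFR /FRC /CUN].
  split; first by move=> x; split; [exact: UJ_FU | move=> /FUFR /FRC /CUN /UN_UJ].
  split; first by move=> x; split; [exact: FUFR | move=> /FRC /CUN /UN_UJ /UJ_FU].
  by move=> x; split; [exact: FRC | move=> /CUN /UN_UJ /UJ_FU /FUFR].
move=> [E1 [E2 [E3 E4]]]; apply: (proj1 UA_SUA); apply: (proj1 CUN_UA) => x Cx.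
by apply/E1/E2/E3/E4.
Qed.
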